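(* If $(X,Q)$ is an $\varepsilon$-representative sequence for a $c$-expensive ($c>0$), oddly- or evenly-priced mechanism $M$ and a distribution $\mathcal{D}$, then for every index $i\ge1$, $\mathrm{gap}_i^{X,Q}\ge p^M(\vec x_i)/2$.
   Context: A mechanism $M$ is a set of options $(\vec q,p)$, $\vec q\in[0,1]^k$, $p\in\mathbb{R}$, containing $(\vec0,0)$; a buyer with values $\vec v\in\mathbb{R}^k_{\ge0}$ selects an option maximizing $\vec v\cdot\vec q-p$, with price $p^M(\vec v)$ and allocation $\vec q^M(\vec v)$. $M$ is $c$-expensive if every non-null option has price $\ge c$; oddly-priced (resp. evenly-priced) if every non-null option price lies in $[c2^i,c2^{i+1})$ for an odd (resp. even) integer $i$. $\varepsilon$-representative sequence: $\vec q_0=\vec0$; $a=1$ if oddly-priced, $a=0$ if evenly-priced; $B_j:=\{\vec v\in\mathrm{supp}(\mathcal{D}):p^M(\vec v)\in[c2^{2(j-1)+a},c2^{2(j-1)+a+1})\}$; for nonempty $B_j$ pick $\vec x_j\in B_j$ with $\|\vec x_j\|_1\le(1+\varepsilon)\|\vec v\|_1$ for all $\vec v\in B_j$ and $\vec q_j:=\vec q^M(\vec x_j)$; empty buckets omitted, indices shifted. $\mathrm{gap}_i^{X,Q}:=\min_{0\le j<i}(\vec q_i-\vec q_j)\cdot\vec x_i$. *)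

(* Defs.v *)
From HB Require Import structures.
From mathcomp Require Import all_boot all_order all_algebra.
Set Implicit Arguments. Unset Strict Implicit. Unset Printing Implicit Defensive.
Import Order.TTheory GRing.Theory Num.Theory.
Local Open Scope ring_scope.

Section Mech.
Variables (R : realFieldType) (k : nat).

Notation vec := 'rV[R]_k.
(* an option (q, p) *)
Notation opt := (vec * R)%type.

Definition dot (v w : vec) : R := \sum_(l < k) v 0 l * w 0 l.
Definition norm1 (v : vec) : R := \sum_(l < k) `|v 0 l|.
Definition nonneg_vec (v : vec) : Prop := forall l, 0 <= v 0 l.

Definition null_opt : opt := (0, 0).

Definition is_mechanism (M : opt -> Prop) : Prop :=
  M null_opt /\ forall o, M o -> forall l, 0 <= o.1 0 l <= 1.

Definition utility (v : vec) (o : opt) : R := dot v o.1 - o.2.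

(* sel v is the option selected by a buyer with values v (arbitrary
   tie-breaking): it belongs to M and maximizes utility over M. *)
Definition buyer_choice (M : opt -> Prop) (sel : vec -> opt) : Prop :=
  forall v, nonneg_vec v ->
    M (sel v) /\ forall o, M o -> utility v o <= utility v (sel v).

Definition price (sel : vec -> opt) (v : vec) : R := (sel v).2.
Definition alloc (sel : vec -> opt) (v : vec) : vec := (sel v).1.

Definition c_expensive (c : R) (M : opt -> Prop) : Prop :=
  forall o, M o -> o <> null_opt -> c <= o.2.

Definition oddly_priced (c : R) (M : opt -> Prop) : Prop :=
  forall o, M o -> o <> null_opt ->
    exists i : int, odd `|i|%N /\ c * 2%:R ^ i <= o.2 < c * 2%:R ^ (i + 1).

Definition evenly_priced (c : R) (M : opt -> Prop) : Prop :=
  forall o, M o -> o <> null_opt ->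
    exists i : int, ~~ odd `|i|%N /\ c * 2%:R ^ i <= o.2 < c * 2%:R ^ (i + 1).

Definition bucket (c : R) (a : nat) (sel : vec -> opt) (S : vec -> Prop)
    (j : nat) (v : vec) : Prop :=
  S v /\ c * 2%:R ^+ (2 * (j - 1) + a) <= price sel v < c * 2%:R ^+ (2 * (j - 1) + a + 1).

(* The indices i >= 1 of the
   sequence are those with I i (a down-closed initial segment of {1,2,...},
   possibly infinite); b i is the bucket index of the i-th element; the map
   i |-> b i enumerates the nonempty buckets in increasing order. *)
Definition rep_seq (eps c : R) (a : nat) (sel : vec -> opt) (S : vec -> Prop)
    (I : nat -> Prop) (b : nat -> nat) (x q : nat -> vec) : Prop :=
  [/\ (forall i, I i -> (0 < i)%N) /\ (forall i, I i.+2 -> I i.+1),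
      q 0%N = 0,
      forall i, I i ->
        [/\ (0 < b i)%N, bucket c a sel S (b i) (x i),
            (forall v, bucket c a sel S (b i) v -> norm1 (x i) <= (1 + eps) * norm1 v)
          & q i = alloc sel (x i)],
      forall i j, I i -> I j -> (i < j)%N -> (b i < b j)%N
    & forall j v, (0 < j)%N -> bucket c a sel S j v -> exists i, I i /\ b i = j].

(* gap_i = min_{0 <= j < i} (q_i - q_j) . x_i   (used for i >= 1) *)
Definition gap (x q : nat -> vec) (i : nat) : R :=
  \big[Num.min/dot (q i - q 0%N) (x i)]_(0 <= j < i) dot (q i - q j) (x i).

End Mech.

(* Main.v *)
Require Import Defs.
From HB Require Import structures.
From mathcomp Require Import all_boot all_order all_algebra.
From mathcomp Require Import lra zify.
Import Order.TTheory GRing.Theory Num.Theory.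
Local Open Scope ring_scope.

Lemma dotC (R : realFieldType) (k : nat) (u v : 'rV[R]_k) : dot u v = dot v u.
Proof. by rewrite /dot; apply: eq_bigr => l _; rewrite mulrC. Qed.

Lemma dotBl (R : realFieldType) (k : nat) (u w v : 'rV[R]_k) :
  dot (u - w) v = dot u v - dot w v.
Proof.
rewrite /dot -sumrB; apply: eq_bigr => l _.
by rewrite !mxE mulrBl.
Qed.

Lemma dot0r (R : realFieldType) (k : nat) (v : 'rV[R]_k) : dot v 0 = 0.
Proof. by rewrite /dot big1 // => l _; rewrite mxE mulr0. Qed.

Arguments dotC {R k}.
Arguments dotBl {R k}.
Arguments dot0r {R k}.
Lemma I_down (I : nat -> Prop) : (forall i, I i.+2 -> I i.+1) ->
  forall i j, I i -> (0 < j)%N -> (j <= i)%N -> I j.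
Proof.
move=> H i j Ii j0 ji; rewrite -(subnKC ji) in Ii.
move: (i - j)%N Ii => d; elim: d => [|d IH]; first by rewrite addn0.
case: j j0 {ji} IH => // j _ IH Id; apply: IH.
by move: Id; rewrite !addSn addnS; apply: H.
Qed.

Theorem claim4p8 (R : realFieldType) (k : nat)
    (M : 'rV[R]_k * R -> Prop) (sel : 'rV[R]_k -> 'rV[R]_k * R)
    (S : 'rV[R]_k -> Prop) (c eps : R) (a : nat)
    (I : nat -> Prop) (b : nat -> nat) (x q : nat -> 'rV[R]_k) :
  0 < c -> 0 < eps ->
  is_mechanism M -> buyer_choice M sel ->
  (forall v, S v -> nonneg_vec v) ->
  c_expensive c M ->
  ((oddly_priced c M /\ a = 1%N) \/ (evenly_priced c M /\ a = 0%N)) ->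
  rep_seq eps c a sel S I b x q ->
  forall i, I i -> price sel (x i) / 2%:R <= gap x q i.
Proof.
move=> c0 _ [Mnull _] bc Snn _ _ [[Ipos Idown] q0 Hx Hb _] i Ii.
have [bi0 [Si /andP[pi_lo pi_hi]] _ qi] := Hx i Ii.
have [_ Ui] := bc _ (Snn _ Si).
set p := price sel (x i).
have p0 : 0 <= p.
  apply: le_trans pi_lo; apply: mulr_ge0; first exact: ltW.
  by apply: exprn_ge0.
have key : forall j, (j < i)%N -> p / 2%:R <= dot (q i - q j) (x i).
  move=> j ji.
  have ui := Ui _ Mnull; rewrite /utility /null_opt /= dot0r sub0r in ui.
  have uiE : utility (x i) (sel (x i)) = dot (q i) (x i) - p.
    by rewrite /utility qi dotC.
  case: j ji => [|j] ji.
    rewrite q0 subr0.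
    have : p <= dot (q i) (x i) by rewrite -subr_ge0 -uiE; apply: le_trans ui; rewrite oppr0.
    apply: le_trans; rewrite ler_pdivrMr ?ltr0n // ler_peMr //.
    by rewrite ler1n.
  have Ij : I j.+1 by apply: (@I_down _ Idown _ _ Ii) => //; apply: ltnW.
  have [bj0 [Sj /andP[_ pj_hi]] _ qj] := Hx _ Ij.
  have bji := Hb _ _ Ij Ii ji.
  have [Mj _] := bc _ (Snn _ Sj).
  have uj := Ui _ Mj.
  rewrite uiE /utility -/(alloc sel (x j.+1)) -qj in uj.
  rewrite dotC in uj; rewrite dotBl.
  have : price sel (x j.+1) < p / 2%:R.
    apply: (lt_le_trans pj_hi).
    rewrite ler_pdivlMr ?ltr0n //.
    apply: le_trans pi_lo.
    rewrite -mulrA ler_pM2l // -exprSr ler_eXn2l ?ler1n ?ltr1n //.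
    lia.
  rewrite /price => hpj.
  lra.
rewrite /gap big_seq; elim/big_ind: _.
- by apply: key; apply: Ipos.
- by move=> u w hu hw; rewrite le_min hu hw.
- by move=> j; rewrite mem_index_iota => /andP[_]; apply: key.
Qed.
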